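(* In $\varepsilon\tau(\mathbf{C})$ (classical logic), for every derivation $\pi$ and every critical $\varepsilon\tau$-term $e$ of $\pi$ there is a complete $e$-elimination set.
   Context: $\mathbf{C}$ is classical propositional logic. $\varepsilon\tau$-terms: $\varepsilon x\,A(x)$, $\tau x\,A(x)$. Critical formulas: $A(t)\to A(\varepsilon x\,A(x))$ (belonging to its critical term $\varepsilon x\,A(x)$) and $A(\tau x\,A(x))\to A(t)$ (belonging to $\tau x\,A(x)$). A derivation $\pi$ of $D$ in $\varepsilon\tau(\mathbf{L})$ is a derivation in the quantifier-free language with $\varepsilon\tau$-terms from a finite set of critical formulas using substitution instances of theorems of $\mathbf{L}$ and modus ponens; $e$ is a critical $\varepsilon\tau$-term of $\pi$ if some critical formula used in $\pi$ belongs to $e$. Write the critical formulas of $\pi$ as $\Gamma\cup\Lambda(e)$, $\Lambda(e)$ all those belonging to $e$, and the end formula as $D(e)$; $\Gamma[s/e]$, $D(s)$ denote replacement of every occurrence of $e$ by $s$. $\{s_1,\dots,s_k\}$ is a complete $e$-elimination set for $\pi$ if $\Gamma[s_1/e],\dots,\Gamma[s_k/e]\vdash_{\mathbf{L}}D(s_1)\lor\dots\lor D(s_k)$ (derivability from these assumptions by substitution instances of theorems of $\mathbf{L}$ and modus ponens; the assumptions need not be critical formulas). *)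

(* Defs.v *)
From Stdlib Require List.
From mathcomp Require Import all_boot.
Set Implicit Arguments.
Unset Strict Implicit.
Unset Printing Implicit Defensive.

(* TVar n is the variable with de Bruijn index n; TEps A / TTau A bind      *)
(* index 0 in A (i.e. TEps A is  eps x A(x)).  Function and predicate       *)
Inductive term : Type :=
| TVar : nat -> term
| TFun : nat -> list term -> term
| TEps : form -> term
| TTau : form -> term
with form : Type :=
| FAtom : nat -> list term -> form
| FBot : form
| FAnd : form -> form -> form
| FOr  : form -> form -> form
| FImp : form -> form -> form.

Fixpoint teqb (t u : term) {struct t} : bool :=
  match t, u with
  | TVar n, TVar m => n == m
  | TFun f ts, TFun g us =>
      (f == g) &&
      (fix leqb (ts us : list term) {struct ts} : bool :=
         match ts, us with
         | nil, nil => true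
         | a :: ts', b :: us' => teqb a b && leqb ts' us'
         | _, _ => false
         end) ts us
  | TEps A, TEps B => feqb A B
  | TTau A, TTau B => feqb A B
  | _, _ => false
  end
with feqb (A B : form) {struct A} : bool :=
  match A, B with
  | FAtom p ts, FAtom q us =>
      (p == q) &&
      (fix leqb (ts us : list term) {struct ts} : bool :=
         match ts, us with
         | nil, nil => true
         | a :: ts', b :: us' => teqb a b && leqb ts' us'
         | _, _ => false
         end) ts us
  | FBot, FBot => true
  | FAnd A1 A2, FAnd B1 B2 => feqb A1 B1 && feqb A2 B2
  | FOr A1 A2, FOr B1 B2 => feqb A1 B1 && feqb A2 B2
  | FImp A1 A2, FImp B1 B2 => feqb A1 B1 && feqb A2 B2
  | _, _ => false
  end.

Fixpoint tlift (c : nat) (t : term) {struct t} : term :=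
  match t with
  | TVar n => TVar (if c <= n then n.+1 else n)
  | TFun f ts => TFun f (map (tlift c) ts)
  | TEps A => TEps (flift c.+1 A)
  | TTau A => TTau (flift c.+1 A)
  end
with flift (c : nat) (A : form) {struct A} : form :=
  match A with
  | FAtom p ts => FAtom p (map (tlift c) ts)
  | FBot => FBot
  | FAnd A1 A2 => FAnd (flift c A1) (flift c A2)
  | FOr A1 A2 => FOr (flift c A1) (flift c A2)
  | FImp A1 A2 => FImp (flift c A1) (flift c A2)
  end.

(* capture-avoiding substitution of u for index c (removing that index) *)
Fixpoint tsubst (c : nat) (u : term) (t : term) {struct t} : term :=
  match t with
  | TVar n => if n == c then u else if c < n then TVar n.-1 else TVar n
  | TFun f ts => TFun f (map (tsubst c u) ts)
  | TEps A => TEps (fsubst c.+1 (tlift 0 u) A)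
  | TTau A => TTau (fsubst c.+1 (tlift 0 u) A)
  end
with fsubst (c : nat) (u : term) (A : form) {struct A} : form :=
  match A with
  | FAtom p ts => FAtom p (map (tsubst c u) ts)
  | FBot => FBot
  | FAnd A1 A2 => FAnd (fsubst c u A1) (fsubst c u A2)
  | FOr A1 A2 => FOr (fsubst c u A1) (fsubst c u A2)
  | FImp A1 A2 => FImp (fsubst c u A1) (fsubst c u A2)
  end.

(* A(t), for A the body of  eps x A(x)  (bound variable = index 0) *)
Definition inst (A : form) (t : term) : form := fsubst 0 t A.

(* replacement of every occurrence of e by s (occurrences under a binder
   are the shifted copies of e, and s is shifted accordingly) *)
Fixpoint trepl (e s : term) (t : term) {struct t} : term :=
  if teqb t e then s else
  match t with
  | TVar n => TVar n
  | TFun f ts => TFun f (map (trepl e s) ts)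
  | TEps A => TEps (frepl (tlift 0 e) (tlift 0 s) A)
  | TTau A => TTau (frepl (tlift 0 e) (tlift 0 s) A)
  end
with frepl (e s : term) (A : form) {struct A} : form :=
  match A with
  | FAtom p ts => FAtom p (map (trepl e s) ts)
  | FBot => FBot
  | FAnd A1 A2 => FAnd (frepl e s A1) (frepl e s A2)
  | FOr A1 A2 => FOr (frepl e s A1) (frepl e s A2)
  | FImp A1 A2 => FImp (frepl e s A1) (frepl e s A2)
  end.

Inductive pform : Type :=
| PVar : nat -> pform
| PBot : pform
| PAnd : pform -> pform -> pform
| POr  : pform -> pform -> pform
| PImp : pform -> pform -> pform.

Fixpoint peval (v : nat -> bool) (P : pform) : bool :=
  match P with
  | PVar n => v n
  | PBot => false
  | PAnd P1 P2 => peval v P1 && peval v P2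
  | POr P1 P2 => peval v P1 || peval v P2
  | PImp P1 P2 => peval v P1 ==> peval v P2
  end.

(* theorems of classical propositional logic C = the tautologies *)
Definition C_theorem (P : pform) : Prop := forall v, peval v P.

Fixpoint psubst (sigma : nat -> form) (P : pform) : form :=
  match P with
  | PVar n => sigma n
  | PBot => FBot
  | PAnd P1 P2 => FAnd (psubst sigma P1) (psubst sigma P2)
  | POr P1 P2 => FOr (psubst sigma P1) (psubst sigma P2)
  | PImp P1 P2 => FImp (psubst sigma P1) (psubst sigma P2)
  end.

Definition L_instance (L : pform -> Prop) (phi : form) : Prop :=
  exists P sigma, L P /\ psubst sigma P = phi.

Inductive rule : Type :=
| RHyp : rule
| RAx  : rule
| RMP  : nat -> nat -> rule.

Definition justified (L : pform -> Prop) (Hyp : form -> Prop)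
  (prev : seq form) (phi : form) (r : rule) : Prop :=
  match r with
  | RHyp => Hyp phi
  | RAx => L_instance L phi
  | RMP i j => i < size prev /\ j < size prev /\
               nth FBot prev j = FImp (nth FBot prev i) phi
  end.

Fixpoint valid_from (L : pform -> Prop) (Hyp : form -> Prop)
  (prev : seq form) (pi : seq (form * rule)) : Prop :=
  match pi with
  | nil => True
  | (phi, r) :: rest => justified L Hyp prev phi r /\
                        valid_from L Hyp (rcons prev phi) rest
  end.

Definition derivation (L : pform -> Prop) (Hyp : form -> Prop)
  (pi : seq (form * rule)) (D : form) : Prop :=
  pi <> nil /\ valid_from L Hyp nil pi /\ last FBot (map fst pi) = D.

Definition derivable (L : pform -> Prop) (Hyp : form -> Prop) (D : form) : Prop :=
  exists pi, derivation L Hyp pi D.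

Definition belongs (phi : form) (e : term) : Prop :=
  (exists A t, e = TEps A /\ phi = FImp (inst A t) (inst A e)) \/
  (exists A t, e = TTau A /\ phi = FImp (inst A e) (inst A t)).

Definition critical (phi : form) : Prop := exists e, belongs phi e.

Definition et_derivation (L : pform -> Prop) (pi : seq (form * rule)) (D : form) :=
  derivation L critical pi D.

Definition used_crit (pi : seq (form * rule)) (phi : form) : Prop :=
  List.In (phi, RHyp) pi.

Definition critical_term_of (pi : seq (form * rule)) (e : term) : Prop :=
  exists phi, used_crit pi phi /\ belongs phi e.

Definition Gamma (pi : seq (form * rule)) (e : term) (phi : form) : Prop :=
  used_crit pi phi /\ ~ belongs phi e.

Fixpoint bigOr (l : seq form) : form :=
  match l with
  | nil => FBot
  | [:: A] => A
  | A :: l' => FOr A (bigOr l')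
  end.

Definition complete_elim_set (L : pform -> Prop) (pi : seq (form * rule))
  (D : form) (e : term) (ss : seq term) : Prop :=
  ss <> nil /\
  derivable L
    (fun phi => exists s psi, List.In s ss /\ Gamma pi e psi /\ phi = frepl e s psi)
    (bigOr (map (fun s => frepl e s D) ss)).

(* Main.v *)
Require Import Defs.
From mathcomp Require Import all_boot.
From Stdlib Require Import Classical ClassicalEpsilon Lia.
From mathcomp Require Import zify.

Section Ind.
Variables (P : term -> Prop) (Q : form -> Prop).
Hypotheses (hV : forall n, P (TVar n))
  (hF : forall f ts, List.Forall P ts -> P (TFun f ts))
  (hE : forall A, Q A -> P (TEps A))
  (hT : forall A, Q A -> P (TTau A))
  (hA : forall p ts, List.Forall P ts -> Q (FAtom p ts))
  (hB : Q FBot)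
  (hAnd : forall a b, Q a -> Q b -> Q (FAnd a b))
  (hOr : forall a b, Q a -> Q b -> Q (FOr a b))
  (hImp : forall a b, Q a -> Q b -> Q (FImp a b)).
Fixpoint tind (t : term) : P t :=
  match t with
  | TVar n => hV n
  | TFun f ts => hF f ts ((fix go (l : list term) : List.Forall P l :=
        match l with nil => List.Forall_nil _ | x :: l' => List.Forall_cons _ (tind x) (go l') end) ts)
  | TEps A => hE A (find A)
  | TTau A => hT A (find A)
  end
with find (A : form) : Q A :=
  match A with
  | FAtom p ts => hA p ts ((fix go (l : list term) : List.Forall P l :=
        match l with nil => List.Forall_nil _ | x :: l' => List.Forall_cons _ (tind x) (go l') end) ts)
  | FBot => hB
  | FAnd a b => hAnd a b (find a) (find b)
  | FOr a b => hOr a b (find a) (find b)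
  | FImp a b => hImp a b (find a) (find b)
  end.
Lemma tfind : (forall t, P t) /\ (forall A, Q A).
Proof. split; [exact tind | exact find]. Qed.
End Ind.

Section LEQ.
Variable eqb : term -> term -> bool.
Fixpoint leqb (ts us : list term) {struct ts} : bool :=
  match ts, us with
  | nil, nil => true
  | a :: ts', b :: us' => eqb a b && leqb ts' us'
  | _, _ => false
  end.
End LEQ.

Lemma teqb_fun f g ts us : teqb (TFun f ts) (TFun g us) = (f == g) && leqb teqb ts us.
Proof. reflexivity. Qed.
Lemma feqb_atom f g ts us : feqb (FAtom f ts) (FAtom g us) = (f == g) && leqb teqb ts us.
Proof. reflexivity. Qed.

Lemma leqb_refl ts : List.Forall (fun t => teqb t t = true) ts -> leqb teqb ts ts = true.
Proof. elim=> //= x l -> _ ->. done. Qed.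

Lemma eqb_refl : (forall t, teqb t t = true) /\ (forall A, feqb A A = true).
Proof.
apply: tfind => //.
- by move=> n /=; rewrite eqxx.
- by move=> f ts H; rewrite teqb_fun eqxx leqb_refl.
- by move=> p ts H; rewrite feqb_atom eqxx leqb_refl.
- by move=> a b /= -> ->.
- by move=> a b /= -> ->.
- by move=> a b /= -> ->.
Qed.

Lemma leqb_sound ts : List.Forall (fun t => forall u, teqb t u = true -> t = u) ts ->
  forall us, leqb teqb ts us = true -> ts = us.
Proof.
elim=> [|x l Hx _ IH] [|y us] //=.
by move/andP=> [/Hx -> /IH ->].
Qed.

Lemma eqb_sound : (forall t u, teqb t u = true -> t = u) /\
                  (forall A B, feqb A B = true -> A = B).
Proof.
apply: tfind.
- by move=> n [m|||] //= /eqP ->.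
- by move=> f ts H [|g us||] //; rewrite teqb_fun => /andP [/eqP -> /(leqb_sound _ H) ->].
- by move=> A IH [||B|B] //= /IH ->.
- by move=> A IH [||B|B] //= /IH ->.
- by move=> p ts H [g us||||] //; rewrite feqb_atom => /andP [/eqP -> /(leqb_sound _ H) ->].
- by case.
- by move=> a b Ha Hb [||a' b'||] //= /andP [/Ha -> /Hb ->].
- by move=> a b Ha Hb [|||a' b'|] //= /andP [/Ha -> /Hb ->].
- by move=> a b Ha Hb [||||a' b'] //= /andP [/Ha -> /Hb ->].
Qed.

Lemma teqbP t u : teqb t u = true -> t = u. Proof. exact: (proj1 eqb_sound). Qed.
Lemma feqbP t u : feqb t u = true -> t = u. Proof. exact: (proj2 eqb_sound). Qed.

Lemma map_Forall (T U : Type) (f g : T -> U) ts :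
  List.Forall (fun t => f t = g t) ts -> map f ts = map g ts.
Proof. by elim=> //= x l -> _ ->. Qed.

Lemma trepl_unfold e s t : trepl e s t = if teqb t e then s else
  match t with
  | TVar n => TVar n
  | TFun f ts => TFun f (map (trepl e s) ts)
  | TEps A => TEps (frepl (tlift 0 e) (tlift 0 s) A)
  | TTau A => TTau (frepl (tlift 0 e) (tlift 0 s) A)
  end.
Proof. by case: t. Qed.

Lemma repl_id : (forall t e, trepl e e t = t) /\ (forall A e, frepl e e A = A).
Proof.
apply: tfind.
- by move=> n e; rewrite trepl_unfold; case: ifP => [/teqbP -> //|//].
- move=> f ts H e; rewrite trepl_unfold; case: ifP => [/teqbP -> //|_].
  congr TFun; rewrite -[RHS]map_id; apply: map_Forall.
  by apply: List.Forall_impl H => t ->.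
- by move=> A IH e; rewrite trepl_unfold; case: ifP => [/teqbP -> //|_]; rewrite IH.
- by move=> A IH e; rewrite trepl_unfold; case: ifP => [/teqbP -> //|_]; rewrite IH.
- move=> p ts H e /=; congr FAtom; rewrite -[RHS]map_id; apply: map_Forall.
  by apply: List.Forall_impl H => t ->.
- by [].
- by move=> a b Ha Hb e /=; rewrite Ha Hb.
- by move=> a b Ha Hb e /=; rewrite Ha Hb.
- by move=> a b Ha Hb e /=; rewrite Ha Hb.
Qed.

Fixpoint tsize (t : term) : nat :=
  match t with
  | TVar _ => 1
  | TFun _ ts => (sumn (map tsize ts)).+1
  | TEps A => (fsize A).+1
  | TTau A => (fsize A).+1
  end
with fsize (A : form) : nat :=
  match A with
  | FAtom _ ts => (sumn (map tsize ts)).+1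
  | FBot => 1
  | FAnd a b => (fsize a + fsize b).+1
  | FOr a b => (fsize a + fsize b).+1
  | FImp a b => (fsize a + fsize b).+1
  end.

Lemma size_lift : (forall t c, tsize (tlift c t) = tsize t) /\
                  (forall A c, fsize (flift c A) = fsize A).
Proof.
apply: tfind => //=.
- move=> f ts H c; rewrite -map_comp; congr (sumn _).+1; apply: map_Forall.
  by apply: List.Forall_impl H => t /= ->.
- by move=> A H c; rewrite H.
- by move=> A H c; rewrite H.
- move=> f ts H c; rewrite -map_comp; congr (sumn _).+1; apply: map_Forall.
  by apply: List.Forall_impl H => t /= ->.
- by move=> a b Ha Hb c; rewrite Ha Hb.
- by move=> a b Ha Hb c; rewrite Ha Hb.
- by move=> a b Ha Hb c; rewrite Ha Hb.
Qed.

Lemma sum_disj (T : Type) (f g : T -> nat) k ts :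
  List.Forall (fun t => f t = g t \/ k <= f t) ts ->
  sumn (map f ts) = sumn (map g ts) \/ k <= sumn (map f ts).
Proof.
elim=> [|x l Hx _ IH] /=; first by left.
case: Hx => Hx; case: IH => IH; lia.
Qed.

Lemma size_subst : (forall t c v, tsize (tsubst c v t) = tsize t \/ tsize v <= tsize (tsubst c v t)) /\
                   (forall A c v, fsize (fsubst c v A) = fsize A \/ tsize v <= fsize (fsubst c v A)).
Proof.
apply: tfind.
- move=> n c v /=; case: eqP => _; first by right.
  by case: ifP; left.
- move=> f ts H c v /=; rewrite -map_comp.
  have := @sum_disj _ (tsize \o tsubst c v) tsize (tsize v) ts.
  move=> /(_ (List.Forall_impl _ (fun t Ht => Ht c v) H)) [->|]; [left|right] => //=; lia.
- move=> A H c v /=; have := H c.+1 (tlift 0 v); rewrite (proj1 size_lift); lia.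
- move=> A H c v /=; have := H c.+1 (tlift 0 v); rewrite (proj1 size_lift); lia.
- move=> f ts H c v /=; rewrite -map_comp.
  have := @sum_disj _ (tsize \o tsubst c v) tsize (tsize v) ts.
  move=> /(_ (List.Forall_impl _ (fun t Ht => Ht c v) H)) [->|]; [left|right] => //=; lia.
- by left.
- move=> a b Ha Hb c v /=; have := Ha c v; have := Hb c v; lia.
- move=> a b Ha Hb c v /=; have := Ha c v; have := Hb c v; lia.
- move=> a b Ha Hb c v /=; have := Ha c v; have := Hb c v; lia.
Qed.

Definition isQ u := match u with TEps _ | TTau _ => True | _ => False end.
Lemma isQ_lift c u : isQ u -> isQ (tlift c u). Proof. by case: u. Qed.

Lemma Forall_sz (P : term -> Prop) k ts : List.Forall P ts -> sumn (map tsize ts) < k ->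
  List.Forall (fun t => P t /\ tsize t < k) ts.
Proof.
elim=> [|x l Hx _ IH] /= Hs; first by constructor.
constructor; first by split => //; lia.
apply: IH; lia.
Qed.

Lemma key : (forall X c u s, isQ u -> tsize X < tsize u -> trepl u s (tsubst c u X) = tsubst c s X) /\
            (forall B c u s, isQ u -> fsize B < tsize u -> frepl u s (fsubst c u B) = fsubst c s B).
Proof.
apply: tfind.
- move=> n c u s Hu Hsz; cbn [tsubst].
  case: eqP => _; first by rewrite trepl_unfold (proj1 eqb_refl).
  by case: ifP => _; rewrite trepl_unfold; case: u Hu Hsz.
- move=> f ts H c u s Hu Hsz; cbn [tsubst].
  rewrite trepl_unfold.
  have -> : teqb (TFun f (map (tsubst c u) ts)) u = false by case: u Hu Hsz.
  congr TFun; rewrite -map_comp; apply: map_Forall.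
  have := Forall_sz _ _ _ H (ltnW Hsz).
  by apply: List.Forall_impl => t [Ht Hs] /=; apply: Ht.
- move=> B IH c u s Hu Hsz; cbn [tsubst].
  rewrite trepl_unfold.
  have -> : teqb (TEps (fsubst c.+1 (tlift 0 u) B)) u = false.
    case: u Hu Hsz => // A0 _ Hsz /=.
    case E: feqb => //; move/feqbP: E => E.
    have := (proj2 size_subst) B c.+1 (tlift 0 (TEps A0)).
    rewrite E (proj1 size_lift) /=; simpl in Hsz; lia.
  congr TEps; apply: IH; first exact: isQ_lift.
  by rewrite (proj1 size_lift); simpl in Hsz; lia.
- move=> B IH c u s Hu Hsz; cbn [tsubst].
  rewrite trepl_unfold.
  have -> : teqb (TTau (fsubst c.+1 (tlift 0 u) B)) u = false.
    case: u Hu Hsz => // A0 _ Hsz /=.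
    case E: feqb => //; move/feqbP: E => E.
    have := (proj2 size_subst) B c.+1 (tlift 0 (TTau A0)).
    rewrite E (proj1 size_lift) /=; simpl in Hsz; lia.
  congr TTau; apply: IH; first exact: isQ_lift.
  by rewrite (proj1 size_lift); simpl in Hsz; lia.
- move=> p ts H c u s Hu Hsz /=.
  congr FAtom; rewrite -map_comp; apply: map_Forall.
  have := Forall_sz _ _ _ H (ltnW Hsz).
  by apply: List.Forall_impl => t [Ht Hs] /=; apply: Ht.
- by [].
- move=> a b Ha Hb c u s Hu Hsz /=; simpl in Hsz.
  by rewrite Ha // ?Hb //; lia.
- move=> a b Ha Hb c u s Hu Hsz /=; simpl in Hsz.
  by rewrite Ha // ?Hb //; lia.
- move=> a b Ha Hb c u s Hu Hsz /=; simpl in Hsz.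
  by rewrite Ha // ?Hb //; lia.
Qed.

Lemma repl_inst A e t : isQ e -> fsize A < tsize e -> frepl e t (inst A e) = inst A t.
Proof. by move=> He Hs; rewrite /inst (proj2 key). Qed.

Fixpoint fval (w : form -> bool) (A : form) : bool :=
  match A with
  | FAtom p ts => w (FAtom p ts)
  | FBot => false
  | FAnd a b => fval w a && fval w b
  | FOr a b => fval w a || fval w b
  | FImp a b => fval w a ==> fval w b
  end.

Lemma fval_psubst w sg P : fval w (psubst sg P) = peval (fun n => fval w (sg n)) P.
Proof. by elim: P => //= a -> b ->. Qed.

Lemma fval_repl w e s A : fval (fun a => fval w (frepl e s a)) A = fval w (frepl e s A).
Proof. by elim: A => //= a -> b ->. Qed.

Lemma nth_In (T : Type) (x0 : T) (l : seq T) n : n < size l -> List.In (nth x0 l n) l.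
Proof. elim: l n => [|x l IH] [|n] //= H; first by left. by right; apply: IH. Qed.

Lemma sound w Hyp pi : forall prev, valid_from C_theorem Hyp prev pi ->
  (forall x, List.In x prev -> fval w x) ->
  (forall phi, List.In (phi, RHyp) pi -> fval w phi) ->
  forall phi, List.In phi (map fst pi) -> fval w phi.
Proof.
elim: pi => [|[phi r] pi IH] prev //= [Hj Hv] Hp Hh.
have Hphi : fval w phi.
  case: r Hj Hh => /=.
  - by move=> _ Hh; apply: Hh; left.
  - by move=> [P [sg [HP <-]]] _; rewrite fval_psubst; apply: HP.
  - move=> i j [Hi [Hj' E]] _.
    have := Hp _ (nth_In _ FBot _ _ Hj'); rewrite E /=.
    by move=> /implyP; apply; apply: Hp; apply: nth_In.
move=> x [<- //|Hx]; apply: (IH (rcons prev phi) Hv _ _ x Hx).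
- move=> y; rewrite -cats1 List.in_app_iff => [[/Hp //|[<- //|[]]]].
- by move=> psi Hpsi; apply: Hh; right.
Qed.

Lemma last_In (T : Type) (x0 : T) (l : seq T) : l <> nil -> List.In (last x0 l) l.
Proof.
elim: l x0 => [|x l IH] x0 //= _.
case: l IH => [|y l] IH /=; first by left.
right; exact: IH.
Qed.

Lemma deriv_sound w Hyp pi D : derivation C_theorem Hyp pi D ->
  (forall phi, List.In (phi, RHyp) pi -> fval w phi) -> fval w D.
Proof.
move=> [Hne [Hv <-]] Hh.
apply: (sound w Hyp pi nil Hv) => //.
apply: last_In; by case: pi Hne {Hv Hh}.
Qed.

Fixpoint idx (a : form) (l : seq form) : nat :=
  match l with
  | nil => 0
  | b :: l' => if excluded_middle_informative (a = b) then 0 else (idx a l').+1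
  end.

Lemma nth_idx a l : List.In a l -> nth FBot l (idx a l) = a.
Proof.
elim: l => [|b l IH] //= H.
case: excluded_middle_informative => [E|ne] /=; first by rewrite E.
by apply: IH; case: H => // E; case: ne.
Qed.

Fixpoint abs (l : seq form) (A : form) : pform :=
  match A with
  | FAtom p ts => PVar (idx (FAtom p ts) l)
  | FBot => PBot
  | FAnd a b => PAnd (abs l a) (abs l b)
  | FOr a b => POr (abs l a) (abs l b)
  | FImp a b => PImp (abs l a) (abs l b)
  end.

Fixpoint atoms (A : form) : seq form :=
  match A with
  | FAtom p ts => [:: FAtom p ts]
  | FBot => [::]
  | FAnd a b => atoms a ++ atoms b
  | FOr a b => atoms a ++ atoms b
  | FImp a b => atoms a ++ atoms b
  end.

Lemma psubst_abs l A : (forall a, List.In a (atoms A) -> List.In a l) ->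
  psubst (fun n => nth FBot l n) (abs l A) = A.
Proof.
elim: A => //=.
- by move=> p ts H; rewrite nth_idx //; apply: H; left.
- by move=> a IHa b IHb H; rewrite IHa ?IHb // => x Hx; apply: H; rewrite List.in_app_iff; tauto.
- by move=> a IHa b IHb H; rewrite IHa ?IHb // => x Hx; apply: H; rewrite List.in_app_iff; tauto.
- by move=> a IHa b IHb H; rewrite IHa ?IHb // => x Hx; apply: H; rewrite List.in_app_iff; tauto.
Qed.

Lemma peval_abs v l A : peval v (abs l A) = fval (fun a => v (idx a l)) A.
Proof. by elim: A => //= a -> b ->. Qed.

Lemma valid_inst A : (forall w, fval w A) -> L_instance C_theorem A.
Proof.
move=> H; exists (abs (atoms A) A), (fun n => nth FBot (atoms A) n); split.
- by move=> v; rewrite peval_abs.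
- by apply: psubst_abs.
Qed.

Definition imps (hs : seq form) (G : form) := foldr FImp G hs.

Lemma fval_imps w hs G : ((forall h, List.In h hs -> fval w h) -> fval w G) -> fval w (imps hs G).
Proof.
elim: hs => [|h hs IH] /= H; first by apply: H.
apply/implyP => Hh; apply: IH => H'; apply: H => x [<- //|]; exact: H'.
Qed.

Lemma build Hyp hs G : forall prev i0, i0 < size prev -> nth FBot prev i0 = imps hs G ->
  (forall h, List.In h hs -> Hyp h) ->
  exists rest, valid_from C_theorem Hyp prev rest /\ last (imps hs G) (map fst rest) = G.
Proof.
elim: hs => [|h hs IH] prev i0 Hi E Hh; first by exists nil.
have [rest [Hv Hl]] : exists rest, valid_from C_theorem Hyp (rcons (rcons prev h) (imps hs G)) rest /\ last (imps hs G) (map fst rest) = G.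
  apply: (IH _ (size prev).+1).
  - by rewrite !size_rcons.
  - by rewrite nth_rcons !size_rcons ltnn eqxx.
  - by move=> x Hx; apply: Hh; right.
exists ((h, RHyp) :: (imps hs G, RMP (size prev) i0) :: rest); split => //=.
split; first by apply: Hh; left.
split => //; split; first by rewrite size_rcons.
split; first by rewrite size_rcons ltnW.
by rewrite !nth_rcons Hi ltnn eqxx E.
Qed.

Lemma complete (Hyp : form -> Prop) hs G : (forall h, List.In h hs -> Hyp h) ->
  (forall w, (forall h, List.In h hs -> fval w h) -> fval w G) -> derivable C_theorem Hyp G.
Proof.
move=> Hh Hs.
have vI : forall w, fval w (imps hs G) by move=> w; apply: fval_imps; apply: Hs.
have [rest [Hv Hl]] := build Hyp hs G [:: imps hs G] 0 erefl erefl Hh.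
exists ((imps hs G, RAx) :: rest); split => //; split => //=.
by split => //; apply: valid_inst.
Qed.

Definition crit_with e t phi :=
  (exists A, e = TEps A /\ phi = FImp (inst A t) (inst A e)) \/
  (exists A, e = TTau A /\ phi = FImp (inst A e) (inst A t)).

Lemma wit pi e : exists ts, forall phi, List.In (phi, RHyp) pi -> belongs phi e ->
  exists t, List.In t ts /\ crit_with e t phi.
Proof.
elim: pi => [|[phi r] pi [ts IH]]; first by exists nil.
case: (classic (belongs phi e)) => [Hb|nb].
- have [t Ht] : exists t, crit_with e t phi.
    case: Hb => [[A [t [E1 E2]]]|[A [t [E1 E2]]]]; exists t; [left|right]; exists A; by split.
  exists (t :: ts) => psi /= [[<- _]|Hin] Hbp; first by exists t; split => //; left.
  have [t' [H1 H2]] := IH psi Hin Hbp; exists t'; split => //; by right.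
- exists ts => psi /= [[<- _]|Hin] Hbp; first by case: (nb Hbp).
  exact: IH.
Qed.

Lemma gamma_list pi e : exists gl, forall psi, List.In psi gl <-> Gamma pi e psi.
Proof.
rewrite /Gamma /used_crit.
elim: pi => [|[phi r] pi [gl IH]]; first by exists nil => psi /=; tauto.
case: (classic (r = RHyp /\ ~ belongs phi e)) => [[Er nb]|H].
- exists (phi :: gl) => psi /=; rewrite IH; split.
  + by case=> [<-|[]]; [subst r; tauto|tauto].
  + by case=> [[[<- _]|Hin] nbp]; [left|right].
- exists gl => psi /=; rewrite IH; split; first tauto.
  case=> [[[E1 E2]|Hin] nbp]; last tauto.
  by subst; case: H.
Qed.

Lemma bigOr_true w l x : List.In x l -> fval w x -> fval w (bigOr l).
Proof.
elim: l => [|y l IH] //=.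
case: l IH => [|z l] IH /=; first by case=> // <-.
case=> [<- -> //|Hin Hx].
by rewrite (IH Hin Hx) orbT.
Qed.

Lemma in_smap (T U : Type) (f : T -> U) x l : List.In x l -> List.In (f x) (map f l).
Proof. elim: l => [|y l IH] //= [<-|H]; [left|right; exact: IH] => //. Qed.

Theorem mainTheorem12 :
  forall (pi : seq (form * rule)) (D : form),
    et_derivation C_theorem pi D ->
    forall e : term, critical_term_of pi e ->
    exists ss : seq term, complete_elim_set C_theorem pi D e ss.
Proof.
move=> pi D Hd e _.
have [gl Hgl] := gamma_list pi e.
have [ts Hts] := wit pi e.
exists (e :: ts); split => //.
apply: (complete _ (List.flat_map (fun s => map (frepl e s) gl) (e :: ts))).
- move=> h /List.in_flat_map [s [Hs /List.in_map_iff [psi [<- Hpsi]]]].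
  by exists s, psi; split => //; split => //; apply/Hgl.
move=> w Hw.
have HG : forall s psi, List.In s (e :: ts) -> Gamma pi e psi -> fval w (frepl e s psi).
  move=> s psi Hs Hpsi; apply: Hw; apply/List.in_flat_map; exists s; split => //.
  by apply/List.in_map_iff; exists psi; split => //; apply/Hgl.
suff [s [Hs Hv]] : exists s, List.In s (e :: ts) /\ fval w (frepl e s D).
  by apply: (bigOr_true _ _ (frepl e s D)) Hv; exact: (in_smap _ _ (fun s0 => frepl e s0 D) s (e :: ts) Hs).
have Ds : forall s, List.In s (e :: ts) ->
    (forall phi, List.In (phi, RHyp) pi -> belongs phi e -> fval w (frepl e s phi)) ->
    fval w (frepl e s D).
  move=> s Hs Hl; rewrite -fval_repl; apply: (deriv_sound _ critical pi D Hd) => phi Hphi.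
  rewrite fval_repl; case: (classic (belongs phi e)) => [Hb|nb]; first exact: Hl.
  by apply: HG => //; split.
case: (classic (forall phi, List.In (phi, RHyp) pi -> belongs phi e -> fval w (frepl e e phi))) => [H|H].
  by exists e; split; [left|apply: Ds => //; left].
have [phi Hn] := not_all_ex_not _ _ H.
have [Hin Hn2] := imply_to_and _ _ Hn.
have [Hb Hf] := imply_to_and _ _ Hn2.
rewrite (proj2 repl_id) in Hf.
have [t [Ht Hc]] := Hts phi Hin Hb.
exists t; split; first by right.
apply: Ds; first by right.
move=> psi Hpsi Hbp.
case: Hc => [[A [Ee Ephi]]|[A [Ee Ephi]]]; subst e phi.
- have [Ha Hb'] : fval w (inst A t) /\ ~~ fval w (inst A (TEps A)).
    by move: Hf => /=; case: (fval w (inst A t)); case: (fval w (inst A (TEps A))).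
  case: Hbp => [[A' [t' [E1 E2]]]|[A' [t' [E1 E2]]]] //.
  case: E1 => EA; subst A' psi => /=.
  by rewrite (repl_inst A (TEps A) t) //= Ha implybT.
- have [Ha Hb'] : fval w (inst A (TTau A)) /\ ~~ fval w (inst A t).
    by move: Hf => /=; case: (fval w (inst A t)); case: (fval w (inst A (TTau A))).
  case: Hbp => [[A' [t' [E1 E2]]]|[A' [t' [E1 E2]]]] //.
  case: E1 => EA; subst A' psi => /=.
  by rewrite (repl_inst A (TTau A) t) //= (negbTE Hb').
Qed.
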